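(* The exponential vector space $X:=\mathscr D([0,\infty):\mathbb N)$ has no basis, i.e. $X\smallsetminus X_0$ has no basis.
   Context: An exponential vector space (evs) over a field $K$ is a partially ordered set $(X,\leq)$ with a binary operation $+$ on $X$ and a map $K\times X\to X$, $(\alpha,x)\mapsto \alpha x$, such that: (A1) $(X,+)$ is a commutative semigroup with identity $\theta$; (A2) $x\leq y$ implies $x+z\leq y+z$ and $\alpha x\leq \alpha y$ for all $z\in X$, $\alpha\in K$; (A3) $\alpha(x+y)=\alpha x+\alpha y$, $\alpha(\beta x)=(\alpha\beta)x$, $(\alpha+\beta)x\leq \alpha x+\beta x$, $1x=x$; (A4) $\alpha x=\theta$ iff $\alpha=0$ or $x=\theta$; (A5) $x+(-1)x=\theta$ iff $x\in X_0$, where $X_0:=\{z\in X: y\not\leq z \text{ for all } y\in X\smallsetminus\{z\}\}$ (the set of minimal elements); (A6) for each $x\in X$ there is $p\in X_0$ with $p\leq x$. $\mathscr D([0,\infty):\mathbb N)$ is the set of all sequences $(x_i)_{i\in\mathbb N}$ with $x_i\in[0,\infty)$, over the field $\mathbb C$, with componentwise addition, scalar multiplication $\alpha\cdot(x_i)_i=(|\alpha|x_i)_i$, and the dictionary order: $x\leq y$ iff $x=y$ or $x_i<y_i$ at the least index $i$ with $x_i\neq y_i$; its primitive space is $\{(0,0,\dots)\}$. For $x\in X\smallsetminus X_0$ let $L(x):=\{z\in X: z\geq \alpha x+p \text{ for some } \alpha\in K\smallsetminus\{0\},\ p\in X_0\}$. A subset $B\subseteq X\smallsetminus X_0$ generates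 $X\smallsetminus X_0$ if $X\smallsetminus X_0=\bigcup_{b\in B}L(b)$. Elements $x,y\in X\smallsetminus X_0$ are orderly dependent if $x\in L(y)$ or $y\in L(x)$, and orderly independent otherwise; $B$ is orderly independent if any two distinct members are orderly independent. A basis of $X\smallsetminus X_0$ is an orderly independent generating subset. *)

(* Defs.v *)
From Stdlib Require Import Reals.
From Coquelicot Require Import Coquelicot.
Open Scope R_scope.

(* Candidate elements: real sequences; the carrier X = D([0,oo):N) is the
   set of sequences with all terms in [0, oo). *)
Definition seqR := nat -> R.

Definition inX (x : seqR) : Prop := forall i : nat, 0 <= x i.

Definition seq_eq (x y : seqR) : Prop := forall i : nat, x i = y i.

Definition sadd (x y : seqR) : seqR := fun i => x i + y i.

Definition sscal (a : C) (x : seqR) : seqR := fun i => Cmod a * x i.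

Definition dle (x y : seqR) : Prop :=
  seq_eq x y \/
  exists i : nat, (forall j : nat, (j < i)%nat -> x j = y j) /\ x i < y i.

Definition X0 (z : seqR) : Prop :=
  inX z /\ forall y : seqR, inX y -> ~ seq_eq y z -> ~ dle y z.

Definition Lset (x z : seqR) : Prop :=
  inX z /\ exists (a : C) (p : seqR), a <> 0%C /\ X0 p /\ dle (sadd (sscal a x) p) z.

Definition generates (B : seqR -> Prop) : Prop :=
  forall z : seqR, (inX z /\ ~ X0 z) <-> exists b : seqR, B b /\ Lset b z.

Definition orderly_dependent (x y : seqR) : Prop := Lset y x \/ Lset x y.

Definition orderly_independent_set (B : seqR -> Prop) : Prop :=
  forall x y : seqR, B x -> B y -> ~ seq_eq x y -> ~ orderly_dependent x y.

Definition is_basis (B : seqR -> Prop) : Prop :=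
  (forall b : seqR, B b -> inX b /\ ~ X0 b) /\
  orderly_independent_set B /\ generates B.

(* Main.v *)
Require Import Defs.
From Stdlib Require Import Reals.
From Coquelicot Require Import Coquelicot.
From Stdlib Require Import Lra Lia Classical Arith.

Lemma min_idx (x : seqR) : forall n, x n <> 0 ->
  exists k, x k <> 0 /\ forall j, (j < k)%nat -> x j = 0.
Proof.
  induction n as [n IH] using (well_founded_induction Wf_nat.lt_wf).
  intros Hn.
  destruct (classic (exists j, (j < n)%nat /\ x j <> 0)) as [[j [Hj Hxj]]|H].
  - exact (IH j Hj Hxj).
  - exists n; split; auto. intros j Hj.
    destruct (Req_dec (x j) 0); auto. exfalso; apply H; eauto.
Qed.

Lemma X0_zero : X0 (fun _ => 0).
Proof.
  split. intro; lra.
  intros y Hy Hne [Heq|[i [_ Hi]]]. apply Hne; exact Heq. specialize (Hy i); lra.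
Qed.

Lemma X0_of_zero (b : seqR) : (forall i, b i = 0) -> X0 b.
Proof.
  intros H. split. intro i; rewrite H; lra.
  intros y Hy Hne [Heq|[i [_ Hi]]]. apply Hne; exact Heq. specialize (Hy i); rewrite H in Hi; lra.
Qed.

Lemma Lmem (x z : seqR) (kz : nat) : inX x -> inX z -> 0 < z kz ->
  (forall j, (j < kz)%nat -> z j = 0) -> (forall j, (j < kz)%nat -> x j = 0) -> Lset x z.
Proof.
  intros Hx Hz Hk Hzj Hxj. split; auto.
  set (c := z kz / (x kz + 1)).
  assert (Hx1 : 0 < x kz + 1) by (specialize (Hx kz); lra).
  assert (Hc : 0 < c) by (unfold c; apply Rdiv_lt_0_compat; lra).
  exists (RtoC c), (fun _ => 0). split.
  { apply Cmod_gt_0. rewrite Cmod_R. rewrite Rabs_pos_eq; lra. }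
  split. exact X0_zero.
  right. exists kz. unfold sadd, sscal. rewrite Cmod_R, Rabs_pos_eq by lra. split.
  - intros j Hj. rewrite Hzj, Hxj by auto. ring.
  - unfold c.
    replace (z kz / (x kz + 1) * x kz + 0) with (z kz * (x kz / (x kz + 1))) by (field; lra).
    assert (x kz / (x kz + 1) < 1).
    { apply Rmult_lt_reg_r with (x kz + 1); auto. field_simplify; lra. }
    nra.
Qed.

Lemma Lnot (x z : seqR) (k : nat) : inX x -> 0 < x k -> (forall j, (j <= k)%nat -> z j = 0) -> ~ Lset x z.
Proof.
  intros Hx Hk Hz [_ [a [p [Ha [[Hp _] Hd]]]]].
  apply Cmod_gt_0 in Ha.
  assert (Hw : 0 < sadd (sscal a x) p k).
  { unfold sadd, sscal. specialize (Hp k). nra. }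
  destruct Hd as [Heq|[i [Hag Hi]]].
  - rewrite Heq, Hz in Hw by lia. lra.
  - destruct (le_lt_dec i k) as [Hik|Hik].
    + rewrite Hz in Hi by lia. unfold sadd, sscal in Hi.
      specialize (Hx i); specialize (Hp i). nra.
    + rewrite Hag, Hz in Hw by lia. lra.
Qed.

Definition e (n : nat) : seqR := fun i => if Nat.eq_dec i n then 1 else 0.

Lemma e_in (n : nat) : inX (e n) /\ ~ X0 (e n).
Proof.
  split. { intro i; unfold e; destruct Nat.eq_dec; lra. }
  intros [_ H]. apply (H (fun _ => 0)).
  - intro; lra.
  - intro Heq. specialize (Heq n). unfold e in Heq. destruct Nat.eq_dec; [lra|congruence].
  - right. exists n. unfold e. split.
    + intros j Hj. destruct Nat.eq_dec; [lia|reflexivity].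
    + destruct Nat.eq_dec; [lra|congruence].
Qed.

Theorem mainTheorem14 : ~ exists B : seqR -> Prop, is_basis B.
Proof.
  intros [B [Hne [Hind Hgen]]].
  destruct (proj1 (Hgen (e 0)) (e_in 0)) as [b [Hb _]].
  destruct (Hne b Hb) as [HbX HbX0].
  assert (Hn : exists n, b n <> 0).
  { apply NNPP; intro H. apply HbX0, X0_of_zero. intro i.
    apply NNPP; intro H'; apply H; eauto. }
  destruct Hn as [n Hn]. destruct (min_idx b n Hn) as [k [Hk Hkj]].
  assert (Hkp : 0 < b k) by (specialize (HbX k); lra).
  destruct (proj1 (Hgen (e (S k))) (e_in (S k))) as [b' [Hb' HL]].
  destruct (Hne b' Hb') as [Hb'X Hb'X0].
  assert (Hn' : exists n, b' n <> 0).
  { apply NNPP; intro H. apply Hb'X0, X0_of_zero. intro i.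
    apply NNPP; intro H'; apply H; eauto. }
  destruct Hn' as [n' Hn']. destruct (min_idx b' n' Hn') as [k' [Hk' Hkj']].
  assert (Hkp' : 0 < b' k') by (specialize (Hb'X k'); lra).
  destruct (le_lt_dec k' k) as [Hle|Hlt].
  - apply (Lnot b' (e (S k)) k' Hb'X Hkp'); auto.
    intros j Hj. unfold e. destruct Nat.eq_dec; [lia|reflexivity].
  - apply (Hind b b' Hb Hb').
    + intro Heq. specialize (Heq k). rewrite (Hkj' k Hlt) in Heq. lra.
    + left. apply (Lmem b' b k Hb'X HbX Hkp Hkj).
      intros j Hj. apply Hkj'. lia.
Qed.
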